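(* Let $c\ge1$ be an odd integer. Every $c$-indistinguishable finite bias distribution is also $(c+1)$-indistinguishable.
   Context: A finite bias distribution is a probability distribution $\mathcal{P}$ supported on a finite subset of $(0,1)$ that is symmetric: it outputs $a$ and $1-a$ with the same probability. $E_p$ is expectation over $p\sim\mathcal{P}$. $\sigma(p)=\sqrt{(1-p)/p}$; for integers $\ell\ge1$, $0\le x\le\ell$, $f_{\ell,x}(p)=p^x(1-p)^{\ell-x}(x\sigma(p)-(\ell-x)\sigma(1-p))$ and $R_{\ell,x}=\max\{0,E_p[f_{\ell,x}(p)]\}$. For a positive integer $c$, $\mathcal{P}$ is $c$-indistinguishable if $\sum_{x=1}^{\ell-1}\binom{\ell}{x}R_{\ell,x}=0$ for all $2\le\ell\le c$ (so every such distribution is $1$-indistinguishable). *)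

(* Defs.v *)
From HB Require Import structures.
From mathcomp Require Import all_boot all_order all_algebra.
From mathcomp Require Import reals.
Set Implicit Arguments. Unset Strict Implicit. Unset Printing Implicit Defensive.
Import Order.TTheory GRing.Theory Num.Theory.
Local Open Scope ring_scope.

(* A finite bias distribution is given by a finite support S (a duplicate-free
   list of points) and a weight function w; P(p) = w p for p in S, 0 elsewhere. *)
Definition is_bias_dist (R : realType) (S : seq R) (w : R -> R) : Prop :=
  [/\ uniq S,
      (forall p, p \in S -> 0 < p < 1),
      (forall p, p \in S -> 0 <= w p),
      \sum_(p <- S) w p = 1
    & (forall p, p \in S -> (1 - p) \in S /\ w (1 - p) = w p)].

Definition Ep (R : realType) (S : seq R) (w : R -> R) (g : R -> R) : R :=
  \sum_(p <- S) w p * g p.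

Definition sigma (R : realType) (p : R) : R := Num.sqrt ((1 - p) / p).

Definition f_lx (R : realType) (l x : nat) (p : R) : R :=
  p ^+ x * (1 - p) ^+ (l - x)
    * (x%:R * sigma p - (l - x)%:R * sigma (1 - p)).

Definition R_lx (R : realType) (S : seq R) (w : R -> R) (l x : nat) : R :=
  Num.max 0 (Ep S w (@f_lx R l x)).

Definition indistinguishable (R : realType) (c : nat) (S : seq R) (w : R -> R)
  : Prop :=
  forall l : nat, (2 <= l <= c)%N ->
    \sum_(1 <= x < l) 'C(l, x)%:R * R_lx S w l x = 0.

(* Main.v *)
Require Import Defs.
From HB Require Import structures.
From mathcomp Require Import all_boot all_order all_algebra.
From mathcomp Require Import reals.
From mathcomp Require Import zify ring lra.
Import Order.TTheory GRing.Theory Num.Theory.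
Local Open Scope ring_scope.

Lemma sigma_id (R : realType) (p : R) : 0 < p < 1 ->
  p * sigma p = (1 - p) * sigma (1 - p).
Proof.
move=> /andP[p0 p1]; rewrite /sigma.
have q0 : 0 < 1 - p by rewrite subr_gt0.
have -> : 1 - (1 - p) = p by ring.
rewrite -{1}(@ger0_norm _ p) ?ltW // -sqrtr_sqr -sqrtrM ?sqr_ge0 //.
rewrite -{2}(@ger0_norm _ (1 - p)) ?ltW // -sqrtr_sqr -sqrtrM ?sqr_ge0 //.
congr Num.sqrt; field; rewrite ?gt_eqF //.
Qed.

Lemma frec (R : realType) (l x : nat) (p : R) : (x <= l)%N -> 0 < p < 1 ->
  f_lx l x p = f_lx l.+1 x p + f_lx l.+1 x.+1 p.
Proof.
move=> hx hp; have hs := @sigma_id R p hp.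
rewrite /f_lx subSn // subSS.
set s := sigma p; set t := sigma (1 - p).
apply/eqP; rewrite -subr_eq0; apply/eqP.
transitivity (p ^+ x * (1 - p) ^+ (l - x) * ((1 - p) * t - p * s)); last by rewrite hs subrr mulr0.
rewrite !exprS; ring.
Qed.

Lemma fsym (R : realType) (l x : nat) (p : R) : (x <= l)%N ->
  f_lx l (l - x) (1 - p) = - f_lx l x p.
Proof.
move=> hx; rewrite /f_lx subKn //.
have -> : 1 - (1 - p) = p by ring.
ring.
Qed.

Lemma Ep_sym (R : realType) (S : seq R) (w : R -> R) (g : R -> R) :
  is_bias_dist S w -> Ep S w g = Ep S w (fun p => g (1 - p)).
Proof.
case=> uS _ _ _ hsym.
have inj : injective (fun p : R => 1 - p).
  by apply: (can_inj (g := fun p : R => 1 - p)) => p /=; ring.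
have hperm : perm_eq S (map (fun p => 1 - p) S).
  apply: uniq_perm => //; first by rewrite map_inj_uniq.
  move=> y; apply/idP/mapP.
    move=> yS; exists (1 - y); first by case: (hsym y yS).
    by ring.
  by case=> z zS ->; case: (hsym z zS).
rewrite /Ep (perm_big _ hperm) big_map.
by apply: eq_big_seq => p pS; case: (hsym p pS) => _ ->.
Qed.

Lemma Erec (R : realType) (S : seq R) (w : R -> R) (l x : nat) :
  is_bias_dist S w -> (x <= l)%N ->
  Ep S w (f_lx l x) = Ep S w (f_lx l.+1 x) + Ep S w (f_lx l.+1 x.+1).
Proof.
case=> _ hp _ _ _ hx; rewrite /Ep -big_split; apply: eq_big_seq => p pS /=.
by rewrite -mulrDr -frec // hp.
Qed.

Lemma Esym (R : realType) (S : seq R) (w : R -> R) (l x : nat) :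
  is_bias_dist S w -> (x <= l)%N ->
  Ep S w (f_lx l (l - x)) = - Ep S w (f_lx l x).
Proof.
move=> hb hx; rewrite (@Ep_sym R S w (f_lx l (l - x)) hb) /Ep -sumrN.
by apply: eq_bigr => p _; rewrite fsym // mulrN.
Qed.

Lemma ind_le (R : realType) (c : nat) (S : seq R) (w : R -> R) (l x : nat) :
  indistinguishable c S w -> (2 <= l <= c)%N -> (1 <= x < l)%N ->
  Ep S w (f_lx l x) <= 0.
Proof.
move=> H hl hx; have := H l hl.
rewrite (bigD1_seq x) /= ?mem_index_iota ?iota_uniq //.
have hR : forall y, 0 <= R_lx S w l y by move=> y; rewrite /R_lx le_max lexx.
move/eqP; rewrite paddr_eq0; first last.
- by apply: sumr_ge0 => y _; rewrite mulr_ge0.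
- by rewrite mulr_ge0.
rewrite mulf_eq0 pnatr_eq0 => /andP[/orP[hC|/eqP R0] _].
  by move: hC; rewrite eqn0Ngt bin_gt0 ltnW //; case/andP: hx.
have : Ep S w (f_lx l x) <= R_lx S w l x by rewrite /R_lx le_max lexx orbT.
by rewrite R0.
Qed.

Arguments ind_le {R c S w l x}.
Arguments Esym {R S w l x}.
Arguments Erec {R S w l x}.

Theorem proposition4 (R : realType) (c : nat) (S : seq R) (w : R -> R) :
  (1 <= c)%N -> odd c ->
  is_bias_dist S w ->
  indistinguishable c S w ->
  indistinguishable c.+1 S w.
Proof.
move=> c1 oc hb H.
pose a x := Ep S w (f_lx c.+1 x).
have A : forall x, (1 <= x)%N -> (x < c)%N -> Ep S w (f_lx c x) = 0.
  move=> x x1 xc; apply/le_anti; rewrite (ind_le H) /=; last 2 first.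
  - by apply/andP; split; lia.
  - by apply/andP; split; lia.
  rewrite -oppr_le0 -(Esym hb); last by lia.
  by apply: (ind_le H); apply/andP; split; lia.
have B : forall x, (1 <= x)%N -> (x < c)%N -> a x.+1 = - a x.
  move=> x x1 xc; have := A x x1 xc; rewrite (Erec hb); last by lia.
  by move/eqP; rewrite addr_eq0 => /eqP; rewrite /a => ->; rewrite opprK.
have C : forall n, (n <= c.-1)%N -> a n.+1 = (-1) ^+ n * a 1%N.
  elim=> [|n IH] hn; first by rewrite expr0 mul1r.
  rewrite B; last 2 first.
  - by lia.
  - by lia.
  by rewrite IH; last lia; rewrite exprS mulN1r mulNr.
have hc : c = (c./2).*2.+1 by rewrite -[LHS]odd_double_half oc.
set k := c./2 in hc.
have {}hc : c = (k + k).+1 by rewrite hc addnn.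
clearbody k.
have Am : a k.+1 = 0.
  have := Esym hb (l := c.+1) (x := k.+1); rewrite -/(a _).
  have -> : (c.+1 - k.+1 = k.+1)%N by lia.
  by move=> /(_ ltac:(lia)); rewrite /a => h; lra.
have A1 : a 1%N = 0.
  move: Am; rewrite C; last by lia.
  by move/eqP; rewrite mulf_eq0 signr_eq0 => /eqP.
have Z : forall x, (1 <= x <= c)%N -> a x = 0.
  move=> [|x] /andP[hx1 hx2] //.
  by rewrite C; [rewrite A1 mulr0 | lia].
move=> l /andP[l2 lc]; have [hl|->] : (l <= c)%N \/ l = c.+1 by lia.
  by apply: H; apply/andP; split; lia.
rewrite big_seq_cond big1 // => x /andP[]; rewrite mem_index_iota => hx _.
have := Z x; rewrite /a /R_lx => ->; first by rewrite maxxx mulr0.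
by apply/andP; split; lia.
Qed.
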